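(* Let $A,B$ be finite-dimensional $K$-subspaces of $L$ and set $D=A_*^{-1}A\cap BB_*^{-1}$. Suppose that $AD\not\subset A$ or $DB\not\subset B$. Then there exist $K$-subspaces $A_1,B_1$ of $L$ such that: (1) $A_1\neq\{0\}$ and $B_1\neq\{0\}$; (2) $\langle A_1B_1\rangle\subset\langle AB\rangle$; (3) either $\dim_KA_1+\dim_KB_1=\dim_KA+\dim_KB$ and $\dim_KA_1>\dim_KA$, or $\dim_KA_1+\dim_KB_1>\dim_KA+\dim_KB$.
   Context: $K$ is a commutative field and $L$ is a (possibly noncommutative) division ring containing $K$ in its center. For $S\subset L$, $\langle S\rangle$ denotes the $K$-subspace of $L$ spanned by $S$. For subsets $S_1,S_2,\dots$ of $L$, $S_1S_2=\{s_1s_2\mid s_1\in S_1,s_2\in S_2\}$ (product set), and similarly for more factors. For $X\subset L$, $X_*=X\setminus\{0\}$ and $X_*^{-1}=\{x^{-1}\mid x\in X_*\}$. *)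

(* Defs.v *)
From HB Require Import structures.
From mathcomp Require Import all_boot all_order all_algebra.
Set Implicit Arguments. Unset Strict Implicit. Unset Printing Implicit Defensive.
Import Order.TTheory GRing.Theory.
Local Open Scope ring_scope.

(* L is a K-algebra (scalars of K central, since algType means scaling
   associates on both sides) with inverses; the division-ring hypothesis is
   stated in the theorem. *)

Section Defs.
Variables (K : fieldType) (L : unitAlgType K).

Definition span_seq (s : seq L) (x : L) : Prop :=
  exists c : 'I_(size s) -> K, x = \sum_(i < size s) c i *: s`_i.

Definition lin_free (s : seq L) : Prop :=
  forall c : 'I_(size s) -> K,
    \sum_(i < size s) c i *: s`_i = 0 -> forall i, c i = 0.

Definition gen (S : L -> Prop) (x : L) : Prop :=
  exists s : seq L, (forall y, y \in s -> S y) /\ span_seq s x.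

Definition is_subspace (A : L -> Prop) : Prop :=
  A 0 /\ forall (k : K) (x y : L), A x -> A y -> A (k *: x + y).

Definition has_dim (A : L -> Prop) (n : nat) : Prop :=
  exists s : seq L, size s = n /\ lin_free s /\ (forall x, A x <-> span_seq s x).

Definition prodset (S1 S2 : L -> Prop) (x : L) : Prop :=
  exists a b, S1 a /\ S2 b /\ x = a * b.

Definition Dset (A B : L -> Prop) (d : L) : Prop :=
  (exists a1 a2, A a1 /\ a1 != 0 /\ A a2 /\ d = a1^-1 * a2) /\
  (exists b1 b2, B b1 /\ B b2 /\ b2 != 0 /\ d = b1 * b2^-1).

Definition subset_of (S T : L -> Prop) : Prop := forall x, S x -> T x.

Definition nonzero_space (A : L -> Prop) : Prop := exists x, A x /\ x != 0.

End Defs.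

(* Main.v *)
Require Import Defs.
From HB Require Import structures.
From mathcomp Require Import all_boot all_order all_algebra.
From Stdlib Require Import Classical Lia.
Set Implicit Arguments. Unset Strict Implicit. Unset Printing Implicit Defensive.
Import Order.TTheory GRing.Theory.
Local Open Scope ring_scope.

Section Aux.
Variables (K : fieldType) (L : unitAlgType K).

Definition span_n (s : seq L) (x : L) : Prop :=
  exists c : nat -> K, x = \sum_(0 <= i < size s) c i *: s`_i.
Definition free_n (s : seq L) : Prop :=
  forall c : nat -> K, \sum_(0 <= i < size s) c i *: s`_i = 0 ->
     forall i, (i < size s)%N -> c i = 0.

Definition ext_c n (c : 'I_n -> K) (j : nat) : K :=
  if insub j is Some i then c i else 0.

Lemma ext_cE n (c : 'I_n -> K) (i : 'I_n) : ext_c c i = c i.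
Proof. by rewrite /ext_c valK. Qed.

Lemma span_nE s x : span_seq s x <-> span_n s x.
Proof.
split=> [[c ->]|[c ->]].
  exists (ext_c c); rewrite big_mkord; apply: eq_bigr => i _; by rewrite ext_cE.
by exists (fun i => c i); rewrite big_mkord.
Qed.

Lemma free_nE s : lin_free s <-> free_n s.
Proof.
split=> [H c Hc i Hi|H c Hc i].
  rewrite big_mkord in Hc; exact: (H (fun j => c j) Hc (Ordinal Hi)).
have := H (ext_c c); rewrite big_mkord.
under eq_bigr => j _ do rewrite ext_cE.
move=> /(_ Hc i (ltn_ord i)); by rewrite ext_cE.
Qed.

Lemma has_dimE U m : has_dim U m <->
  exists s : seq L, size s = m /\ free_n s /\ (forall x, U x <-> span_n s x).
Proof.
split=> [[s [h1 [h2 h3]]]|[s [h1 [h2 h3]]]]; exists s; split=> //; split.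
- by apply/free_nE.
- move=> x; split=> H; [apply/span_nE; apply/h3 | apply/h3; apply/span_nE] => //.
- by apply/free_nE.
- move=> x; split=> H; [apply/span_nE; apply/h3 | apply/h3; apply/span_nE] => //.
Qed.


Lemma span_n_sub s : is_subspace (span_n s).
Proof.
split.
  by exists (fun _ => 0); rewrite big1 // => i _; rewrite scale0r.
move=> k x y [c1 ->] [c2 ->]; exists (fun i => k * c1 i + c2 i).
rewrite scaler_sumr -big_split /=; apply: eq_bigr => i _.
by rewrite scalerDl scalerA.
Qed.

Lemma sub_sum (G : L -> Prop) (n : nat) (F : nat -> L) :
  is_subspace G -> (forall i, (i < n)%N -> G (F i)) -> G (\sum_(0 <= i < n) F i).
Proof.
move=> [G0 GD]; elim: n => [|n IH] H; first by rewrite big_nil.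
rewrite big_nat_recr //= addrC -[F n]scale1r; apply: GD; first exact: H.
by apply: IH => i Hi; apply: H; exact: ltnW.
Qed.

Lemma span_n_closed (G : L -> Prop) s x :
  is_subspace G -> (forall i, (i < size s)%N -> G s`_i) -> span_n s x -> G x.
Proof.
move=> sG H [c ->]; apply: sub_sum => // i Hi.
case: sG => G0 GD; rewrite -[_ *: _]addr0; apply: GD => //; exact: H.
Qed.

Lemma span_n_mem s i : (i < size s)%N -> span_n s s`_i.
Proof.
move=> Hi; exists (fun j => (j == i)%:R).
rewrite big_mkord (bigD1 (Ordinal Hi)) //= eqxx scale1r big1 ?addr0 //.
by move=> j /negbTE; rewrite -val_eqE /= => ->; rewrite scale0r.
Qed.

Lemma span_n_sub2 s t :
  (forall i, (i < size s)%N -> span_n t s`_i) -> forall x, span_n s x -> span_n t x.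
Proof. by move=> H x; apply: span_n_closed => //; exact: span_n_sub. Qed.

Lemma span_n_cons x s y : span_n s y -> span_n (x :: s) y.
Proof.
move=> [c ->]; exists (fun i => if i is j.+1 then c j else 0).
by rewrite big_nat_recl //= scale0r add0r.
Qed.

Lemma free_n_cons x t : free_n t -> ~ span_n t x -> free_n (x :: t).
Proof.
move=> Ht Hx c; rewrite big_nat_recl //= => Hc.
have c0 : c 0%N = 0.
  case: (eqVneq (c 0%N) 0) => // Hn; exfalso; apply: Hx.
  exists (fun i => - ((c 0%N)^-1 * c i.+1)).
  have -> : x = (c 0%N)^-1 *: (c 0%N *: x) by rewrite scalerA mulVf ?scale1r.
  move/eqP: Hc; rewrite addr_eq0 => /eqP ->.
  rewrite scalerN scaler_sumr -sumrN; apply: eq_bigr => i _.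
  by rewrite scalerA scaleNr.
rewrite c0 scale0r add0r in Hc.
case=> [//|i] Hi; exact: (Ht (fun i => c i.+1) Hc i Hi).
Qed.

Lemma extract_basis (S : seq L) :
  exists t, free_n t /\ (forall x, span_n S x <-> span_n t x).
Proof.
elim: S => [|x S [t [Ht HS]]].
  by exists [::]; split=> // c _ i.
have memS : forall i, (i < size (x :: S))%N -> span_n (x :: S) (x :: S)`_i.
  by move=> i; exact: span_n_mem.
case: (classic (span_n t x)) => Hx.
  exists t; split=> // y; split; apply: span_n_sub2.
  - case=> [|i] Hi //=; apply/HS; exact: span_n_mem.
  - move=> i Hi; apply: span_n_cons; apply/HS; exact: span_n_mem.
exists (x :: t); split; first exact: free_n_cons.
move=> y; split; apply: span_n_sub2.
- case=> [|i] Hi /=; first by have := @span_n_mem (x :: t) 0%N; apply.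
  apply: span_n_cons; apply/HS; exact: span_n_mem.
- case=> [|i] Hi /=; first by have := @span_n_mem (x :: S) 0%N; apply.
  apply: span_n_cons; apply/HS; exact: span_n_mem.
Qed.


Section Coord.
Variable t : seq L.
Hypothesis Ht : free_n t.
Local Notation n := (size t).
Local Notation V := 'rV[K]_n.

Definition phi (v : V) : L := \sum_(i < n) v 0 i *: t`_i.

Lemma phiD : {morph phi : x y / x + y}.
Proof.
move=> x y; rewrite /phi -big_split /=; apply: eq_bigr => i _.
by rewrite mxE scalerDl.
Qed.

Lemma phi0 : phi 0 = 0.
Proof. by rewrite /phi big1 // => i _; rewrite mxE scale0r. Qed.

Lemma phiZ k v : phi (k *: v) = k *: phi v.
Proof.
by rewrite /phi scaler_sumr; apply: eq_bigr => i _; rewrite mxE scalerA.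
Qed.

Lemma phi_sum I (r : seq I) (P : pred I) (F : I -> V) :
  phi (\sum_(i <- r | P i) F i) = \sum_(i <- r | P i) phi (F i).
Proof. exact: (big_morph phi phiD phi0). Qed.

Lemma phi_inj v w : phi v = phi w -> v = w.
Proof.
move=> H; have /eqP: phi (v - w) = 0.
  by rewrite phiD -scaleN1r phiZ H scaleN1r subrr.
rewrite /phi => /eqP Hs.
have := (proj2 (free_nE t) Ht (fun i => (v - w) 0 i) Hs).
move=> Hz; apply/rowP => i; apply/eqP; rewrite -subr_eq0.
by have := Hz i; rewrite !mxE => ->.
Qed.

Lemma span_phi x : span_n t x <-> exists v, x = phi v.
Proof.
split=> [[c ->]|[v ->]].
  exists (\row_i c i); rewrite /phi big_mkord; apply: eq_bigr => i _.
  by rewrite mxE.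
exists (ext_c (fun i => v 0 i)); rewrite /phi big_mkord; apply: eq_bigr => i _.
by rewrite ext_cE.
Qed.

Lemma coords (u : seq L) : (forall i, (i < size u)%N -> span_n t u`_i) ->
  exists w : seq V, size w = size u /\
    forall i, (i < size u)%N -> u`_i = phi w`_i.
Proof.
elim: u => [|x u IH] H; first by exists [::].
have [w [Hw1 Hw2]] : exists w : seq V, size w = size u /\
    forall i, (i < size u)%N -> u`_i = phi w`_i.
  by apply: IH => i Hi; exact: (H i.+1).
have [v Hv] := proj1 (span_phi x) (H 0%N isT).
exists (v :: w); split; first by rewrite /= Hw1.
by case=> [|i] Hi //=; apply: Hw2.
Qed.

Definition Pv (U : {vspace V}) (x : L) : Prop := exists v, v \in U /\ x = phi v.

Section Corr.
Variables (u : seq L) (w : seq V).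
Hypotheses (E : size w = size u) (Huw : forall i, (i < size u)%N -> u`_i = phi w`_i).

Lemma corr_span x : span_n u x <-> Pv <<w>>%VS x.
Proof.
split=> [[c ->]|[v [Hv ->]]].
  exists (\sum_(i < size u) c i *: w`_i); split.
    apply: rpred_sum => i _; apply: rpredZ; apply: memv_span; apply: mem_nth.
    by rewrite E.
  rewrite phi_sum big_mkord; apply: eq_bigr => i _.
  by rewrite phiZ Huw.
rewrite (coord_span (X := in_tuple w) Hv) phi_sum.
exists (ext_c (fun i => coord (in_tuple w) i v)).
rewrite -E big_mkord; apply: eq_bigr => i _.
by rewrite phiZ ext_cE -Huw // -E.
Qed.

Lemma corr_free : free_n u <-> free w.
Proof.
split=> [Hu|Hw].
  apply/(@freeP _ _ _ (in_tuple w)) => k Hk i.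
  have := Hu (ext_c k); rewrite -ext_cE => -> //; last by rewrite -E.
  rewrite -E big_mkord; transitivity (phi (\sum_(j < size w) k j *: w`_j)); last by rewrite Hk phi0.
  rewrite phi_sum; apply: eq_bigr => j _.
  by rewrite ext_cE phiZ Huw // -E.
move=> c Hc i Hi.
have Hs : \sum_(j < size w) c j *: w`_j = 0.
  apply: phi_inj; rewrite phi0 -Hc phi_sum -E big_mkord; apply: eq_bigr => j _.
  by rewrite phiZ Huw // -E.
rewrite -E in Hi.
exact: (elimT (@freeP _ _ _ (in_tuple w)) Hw (fun j => c j) Hs (Ordinal Hi)).
Qed.

End Corr.

Lemma Pv_sub U : is_subspace (Pv U).
Proof.
split; first by exists 0; rewrite mem0v phi0.
move=> k x y [v [Hv ->]] [v' [Hv' ->]]; exists (k *: v + v'); split.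
  by rewrite memvD // memvZ.
by rewrite phiD phiZ.
Qed.

Lemma Pv_add U1 U2 x : Pv (U1 + U2)%VS x <->
  exists y z, Pv U1 y /\ Pv U2 z /\ x = y + z.
Proof.
split=> [[v [/memv_addP [v1 H1 [v2 H2 ->]] ->]]|[y [z [[v1 [H1 ->]] [[v2 [H2 ->]] ->]]]]].
  by exists (phi v1), (phi v2); rewrite phiD; split; [exists v1|split; [exists v2|]].
by exists (v1 + v2); rewrite phiD; split => //; apply: memv_add.
Qed.

Lemma Pv_cap U1 U2 x : Pv (U1 :&: U2)%VS x <-> Pv U1 x /\ Pv U2 x.
Proof.
split=> [[v [/memv_capP [H1 H2] ->]]|[[v1 [H1 ->]] [v2 [H2 E2]]]].
  by split; exists v.
have E12 := phi_inj E2; subst v2.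
by exists v1; split => //; apply/memv_capP.
Qed.

Lemma Pv_subset U1 U2 : (forall x, Pv U1 x -> Pv U2 x) -> (U1 <= U2)%VS.
Proof.
move=> H; apply/subvP => v Hv.
have [v' [Hv' E']] := H (phi v) (ex_intro _ v (conj Hv erefl)).
by rewrite (phi_inj E').
Qed.

Lemma Pv_dim U : has_dim (Pv U) (\dim U).
Proof.
apply/has_dimE; exists (map phi (vbasis U)).
have E : size (vbasis U) = size (map phi (vbasis U)) by rewrite size_map.
have Huw : forall i, (i < size (map phi (vbasis U)))%N ->
   (map phi (vbasis U))`_i = phi (vbasis U)`_i.
  by move=> i; rewrite size_map => Hi; rewrite (nth_map 0).
split; first by rewrite size_map size_tuple.
split; first by apply/(corr_free E Huw); exact: basis_free (vbasisP U).
move=> x; rewrite (corr_span E Huw) (span_basis (vbasisP U)); done.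
Qed.

End Coord.

Definition sumP (A B : L -> Prop) x := exists y z, A y /\ B z /\ x = y + z.
Definition capP (A B : L -> Prop) x := A x /\ B x.

Lemma has_dim_ext (U V : L -> Prop) m : (forall x, U x <-> V x) -> has_dim U m -> has_dim V m.
Proof.
move=> H [s [h1 [h2 h3]]]; exists s; split=> //; split=> // x.
by rewrite -h3 H.
Qed.

Lemma ambient (U V : L -> Prop) m k : has_dim U m -> has_dim V k ->
  exists t, exists Ht : free_n t, exists u' v' : {vspace 'rV[K]_(size t)},
   \dim u' = m /\ \dim v' = k /\ (forall x, U x <-> Pv u' x) /\
   (forall x, V x <-> Pv v' x).
Proof.
move=> /has_dimE [su [hu1 [hu2 hu3]]] /has_dimE [sv [hv1 [hv2 hv3]]].
have [t [Ht HS]] := extract_basis (su ++ sv).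
have [wu [Eu Hu]] : exists w : seq 'rV[K]_(size t), size w = size su /\
    forall i, (i < size su)%N -> su`_i = phi (t:=t) w`_i.
  apply: coords => i Hi; apply/HS.
  have -> : su`_i = (su ++ sv)`_i by rewrite nth_cat Hi.
  by apply: span_n_mem; rewrite size_cat ltn_addr.
have [wv [Ev Hv]] : exists w : seq 'rV[K]_(size t), size w = size sv /\
    forall i, (i < size sv)%N -> sv`_i = phi (t:=t) w`_i.
  apply: coords => i Hi; apply/HS.
  have -> : sv`_i = (su ++ sv)`_(size su + i) by rewrite nth_cat ltnNge leq_addr /= addKn.
  by apply: span_n_mem; rewrite size_cat ltn_add2l.
exists t, Ht, <<wu>>%VS, <<wv>>%VS.
split; first by rewrite -hu1 -Eu; apply/eqP; apply/(corr_free Ht Eu Hu).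
split; first by rewrite -hv1 -Ev; apply/eqP; apply/(corr_free Ht Ev Hv).
split=> x; [rewrite hu3 | rewrite hv3]; [exact: corr_span | exact: corr_span].
Qed.

Lemma G_dim (U V : L -> Prop) m k : has_dim U m -> has_dim V k ->
  exists p q, has_dim (sumP U V) p /\ has_dim (capP U V) q /\ (p + q = m + k)%N.
Proof.
move=> hU hV; have [t [Ht [u' [v' [d1 [d2 [e1 e2]]]]]]] := ambient hU hV.
exists (\dim (u' + v')), (\dim (u' :&: v')); split; last split.
- apply: has_dim_ext (Pv_dim Ht _) => x; rewrite Pv_add; split.
    by move=> [y [z [h1 [h2 ->]]]]; exists y, z; rewrite e1 e2.
  by move=> [y [z [h1 [h2 ->]]]]; exists y, z; rewrite -e1 -e2.
- apply: has_dim_ext (Pv_dim Ht _) => x; rewrite (Pv_cap Ht) /capP.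
  by split=> [[/e1 h1 /e2 h2]|[/e1 h1 /e2 h2]].
- rewrite -d1 -d2; exact: dimv_sum_cap.
Qed.

Lemma G_mono (U V : L -> Prop) m k : has_dim U m -> has_dim V k ->
  subset_of U V -> ~ subset_of V U -> (m < k)%N.
Proof.
move=> hU hV sUV nVU; have [t [Ht [u' [v' [d1 [d2 [e1 e2]]]]]]] := ambient hU hV.
have s1 : (u' <= v')%VS.
  by apply: (Pv_subset Ht) => x /e1 /sUV /e2.
rewrite -d1 -d2 ltnNge; apply/negP => Hle; apply: nVU => x /e2.
have /eqP <- : u' == v' by rewrite eqEdim s1 Hle.
by move/e1.
Qed.

Lemma sum_map_r (s : seq L) (a : L) (c : nat -> K) :
  \sum_(0 <= i < size (map (fun y => y * a) s)) c i *: (map (fun y => y * a) s)`_i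
  = (\sum_(0 <= i < size s) c i *: s`_i) * a.
Proof.
rewrite size_map mulr_suml; apply: eq_big_nat => i /andP [_ Hi].
by rewrite (nth_map 0) // scalerAl.
Qed.

Lemma sum_map_l (s : seq L) (a : L) (c : nat -> K) :
  \sum_(0 <= i < size (map (fun y => a * y) s)) c i *: (map (fun y => a * y) s)`_i
  = a * (\sum_(0 <= i < size s) c i *: s`_i).
Proof.
rewrite size_map mulr_sumr; apply: eq_big_nat => i /andP [_ Hi].
by rewrite (nth_map 0) // scalerAr.
Qed.

Lemma scale_r (U : L -> Prop) m e : e \is a GRing.unit ->
  has_dim U m -> has_dim (fun z => U (z * e)) m.
Proof.
move=> He /has_dimE [s [h1 [h2 h3]]]; apply/has_dimE.
exists (map (fun y => y * e^-1) s); split; first by rewrite size_map.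
split.
  move=> c; rewrite sum_map_r size_map => Hc; apply: h2.
  by rewrite -[LHS](divrK He) Hc mul0r.
move=> z; split.
  move=> /h3 [c Hc]; exists c; rewrite sum_map_r -Hc mulrK //.
move=> [c Hc]; apply/h3; exists c; rewrite Hc sum_map_r divrK //.
Qed.

Lemma scale_l (U : L -> Prop) m e : e \is a GRing.unit ->
  has_dim U m -> has_dim (fun z => U (e * z)) m.
Proof.
move=> He /has_dimE [s [h1 [h2 h3]]]; apply/has_dimE.
exists (map (fun y => e^-1 * y) s); split; first by rewrite size_map.
split.
  move=> c; rewrite sum_map_l size_map => Hc; apply: h2.
  by rewrite -[LHS](mulVKr He) Hc mulr0.
move=> z; split.
  move=> /h3 [c Hc]; exists c; rewrite sum_map_l -Hc mulKr //.
move=> [c Hc]; apply/h3; exists c; rewrite Hc sum_map_l mulVKr //.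
Qed.

Lemma sumP_sub (A B : L -> Prop) : is_subspace A -> is_subspace B -> is_subspace (sumP A B).
Proof.
move=> [A0 AD] [B0 BD]; split; first by exists 0, 0; rewrite addr0.
move=> k x y [x1 [x2 [h1 [h2 ->]]]] [y1 [y2 [h3 [h4 ->]]]].
exists (k *: x1 + y1), (k *: x2 + y2); split; first exact: AD.
split; first exact: BD.
by rewrite scalerDr addrACA.
Qed.

Lemma capP_sub (A B : L -> Prop) : is_subspace A -> is_subspace B -> is_subspace (capP A B).
Proof.
move=> [A0 AD] [B0 BD]; split; first by [].
by move=> k x y [h1 h2] [h3 h4]; split; [apply: AD | apply: BD].
Qed.

Lemma scr_sub (A : L -> Prop) e : is_subspace A -> is_subspace (fun z => A (z * e)).
Proof.
move=> [A0 AD]; split; first by rewrite mul0r.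
by move=> k x y h1 h2; rewrite mulrDl -scalerAl; apply: AD.
Qed.

Lemma scl_sub (A : L -> Prop) e : is_subspace A -> is_subspace (fun z => A (e * z)).
Proof.
move=> [A0 AD]; split; first by rewrite mulr0.
by move=> k x y h1 h2; rewrite mulrDr -scalerAr; apply: AD.
Qed.

Lemma gen_sub (S : L -> Prop) : is_subspace (gen S).
Proof.
split.
  exists [::]; split=> //; exists (fun _ => 0); by rewrite big_ord0.
move=> k x y [s1 [h1 /span_nE h2]] [s2 [h3 /span_nE h4]].
exists (s1 ++ s2); split.
  by move=> z; rewrite mem_cat => /orP [/h1|/h3].
apply/span_nE; case: (span_n_sub (s1 ++ s2)) => _; apply.
  apply: (span_n_sub2 _ h2) => i Hi.
  have -> : s1`_i = (s1 ++ s2)`_i by rewrite nth_cat Hi.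
  by apply: span_n_mem; rewrite size_cat ltn_addr.
apply: (span_n_sub2 _ h4) => i Hi.
have -> : s2`_i = (s1 ++ s2)`_(size s1 + i) by rewrite nth_cat ltnNge leq_addr /= addKn.
by apply: span_n_mem; rewrite size_cat ltn_add2l.
Qed.

Lemma gen_mem (S : L -> Prop) x : S x -> gen S x.
Proof.
move=> Sx; exists [:: x]; split; first by move=> y; rewrite inE => /eqP ->.
by apply/span_nE; exact: (@span_n_mem [:: x] 0%N).
Qed.

Lemma gen_mono (S1 S2 : L -> Prop) :
  (forall x, S1 x -> gen S2 x) -> subset_of (gen S1) (gen S2).
Proof.
move=> H x [s [h1 /span_nE h2]]; apply: (span_n_closed (gen_sub S2) _ h2).
by move=> i Hi; apply: H; apply: h1; apply: mem_nth.
Qed.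

Lemma gen_add (S : L -> Prop) x y : gen S x -> gen S y -> gen S (x + y).
Proof.
move=> h1 h2; case: (gen_sub S) => _ GD; rewrite -[x]scale1r; exact: GD.
Qed.

Lemma arith p1 q1 p2 q2 a b : (p1 + q1 = a + a)%N -> (p2 + q2 = b + b)%N ->
  ((a < p1) \/ (b < p2))%N -> ~ (a + b < p1 + q2)%N -> ~ (a + b < q1 + p2)%N ->
  (p1 + q2 = a + b)%N /\ (a < p1)%N.
Proof.
move=> h1 h2 h3 h4 h5.
have h3' : (a < p1)%coq_nat \/ (b < p2)%coq_nat by case: h3 => /ssrnat.ltP; auto.
have h4' : ~ (a + b < p1 + q2)%coq_nat by move=> /ssrnat.ltP.
have h5' : ~ (a + b < q1 + p2)%coq_nat by move=> /ssrnat.ltP.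
move: h1 h2 h3' h4' h5'; rewrite -!plusE => h1 h2 h3' h4' h5'.
split; [|apply/ssrnat.ltP]; lia.
Qed.

End Aux.

Theorem mainTheorem3 (K : fieldType) (L : unitAlgType K)
  (Ldiv : forall x : L, x != 0 -> x \is a GRing.unit)
  (A B : L -> Prop) (dA dB : nat)
  (sA : is_subspace A) (sB : is_subspace B)
  (hA : has_dim A dA) (hB : has_dim B dB) :
  ~ subset_of (prodset A (Dset A B)) A \/ ~ subset_of (prodset (Dset A B) B) B ->
  exists (A1 B1 : L -> Prop) (dA1 dB1 : nat),
    is_subspace A1 /\ is_subspace B1 /\ has_dim A1 dA1 /\ has_dim B1 dB1 /\
    (nonzero_space A1 /\ nonzero_space B1) /\
    subset_of (gen (prodset A1 B1)) (gen (prodset A B)) /\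
    (((dA1 + dB1 = dA + dB)%N /\ (dA < dA1)%N) \/ (dA + dB < dA1 + dB1)%N).
Proof.
move=> H.
have A0 : A 0 by case: sA.
have B0 : B 0 by case: sB.
have [d [Dd [Hd Hs]]] : exists d, Dset A B d /\ d \is a GRing.unit /\
   (~ subset_of (fun z => A (z * d^-1)) A \/ ~ subset_of (fun z => B (d^-1 * z)) B).
  case: H => H.
  - have [x Hx] := not_all_ex_not _ _ H.
    have [[a [d [Ha [Dd Ex]]]] nA] := imply_to_and _ _ Hx; subst x.
    have dn0 : d != 0 by apply/eqP => d0; apply: nA; rewrite d0 mulr0.
    have Hd := Ldiv d dn0.
    exists d; split; first done; split; first done; left.
    by move=> Hsub; apply: nA; apply: Hsub; rewrite mulrK.
  - have [x Hx] := not_all_ex_not _ _ H.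
    have [[d [b [Dd [Hb Ex]]]] nB] := imply_to_and _ _ Hx; subst x.
    have dn0 : d != 0 by apply/eqP => d0; apply: nB; rewrite d0 mul0r.
    have Hd := Ldiv d dn0.
    exists d; split; first done; split; first done; right.
    by move=> Hsub; apply: nB; apply: Hsub; rewrite mulKr.
case: Dd => [[a1 [a2 [Ha1 [a1n0 [Ha2 Ea]]]]] [b1 [b2 [Hb1 [Hb2 [b2n0 Eb]]]]]].
have hdi : d^-1 \is a GRing.unit by rewrite unitrV.
have hAd := scale_r hdi hA.
have hBdi := scale_l Hd hB.
have [p1 [q1 [hp1 [hq1 e1]]]] := G_dim hA hAd.
have [p2 [q2 [hp2 [hq2 e2]]]] := G_dim hB hBdi.
have hA2 := scale_r Hd hq1.
have hB2 := scale_l hdi hp2.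
have sA1 := sumP_sub sA (scr_sub d^-1 sA).
have sB1 := capP_sub sB (scl_sub d sB).
have sA2 := scr_sub d (capP_sub sA (scr_sub d^-1 sA)).
have sB2 := scl_sub d^-1 (sumP_sub sB (scl_sub d sB)).
have nA1 : nonzero_space (sumP A (fun z => A (z * d^-1))).
  exists a1; split=> //; exists a1, 0; split=> //; split; last by rewrite addr0.
  by rewrite mul0r.
have nB1 : nonzero_space (capP B (fun z => B (d * z))).
  exists b2; split=> //; split=> //=.
  by rewrite Eb mulrVK // Ldiv.
have nA2 : nonzero_space (fun z => capP A (fun z => A (z * d^-1)) (z * d)).
  exists a1; split=> //; split=> /=.
    by rewrite Ea mulVKr // Ldiv.
  by rewrite mulrK.
have nB2 : nonzero_space (fun z => sumP B (fun z => B (d * z)) (d^-1 * z)).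
  exists b2; split=> //; exists 0, (d^-1 * b2); split=> //; split.
    by rewrite mulVKr.
  by rewrite add0r.
have Hs' : (dA < p1)%N \/ (dB < p2)%N.
  case: Hs => nsub; [left | right].
  - apply: (G_mono hA hp1).
      by move=> x Hx; exists x, 0; rewrite mul0r addr0.
    move=> Hsub; apply: nsub => z Hz; apply: Hsub; exists 0, z.
    by rewrite add0r.
  - apply: (G_mono hB hB2).
      move=> x Hx; exists 0, (d^-1 * x); split=> //; split.
        by rewrite mulVKr.
      by rewrite add0r.
    move=> Hsub; apply: nsub => z Hz; apply: Hsub; exists (d^-1 * z), 0.
    by rewrite mulr0 addr0.
have gen1 : subset_of (gen (prodset (sumP A (fun z => A (z * d^-1)))
                           (capP B (fun z => B (d * z))))) (gen (prodset A B)).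
  apply: gen_mono => x [a [b [[y [w [Hy [Hw ->]]]] [[Hb Hdb] ->]]]].
  rewrite mulrDl; apply: gen_add; apply: gen_mem.
    by exists y, b.
  exists (w * d^-1), (d * b); split=> //; split=> //.
  by rewrite mulrA mulrVK.
have gen2 : subset_of (gen (prodset (fun z => capP A (fun z => A (z * d^-1)) (z * d))
                 (fun z => sumP B (fun z => B (d * z)) (d^-1 * z)))) (gen (prodset A B)).
  apply: gen_mono => x [a [b [[Had Hadd] [[y [w [Hy [Hw E]]]] ->]]]].
  have Eb' : b = d * (y + w) by rewrite -E mulVKr.
  rewrite mulrK // in Hadd.
  rewrite Eb' !mulrDr; apply: gen_add; apply: gen_mem.
    by exists (a * d), y; rewrite mulrA.
  by exists a, (d * w).
case: (boolP (dA + dB < p1 + q2)%N) => h1.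
  exists (sumP A (fun z => A (z * d^-1))), (capP B (fun z => B (d * z))), p1, q2.
  do 6 (split; first done); by right.
case: (boolP (dA + dB < q1 + p2)%N) => h2.
  exists (fun z => capP A (fun z => A (z * d^-1)) (z * d)),
         (fun z => sumP B (fun z => B (d * z)) (d^-1 * z)), q1, p2.
  do 6 (split; first done); by right.
exists (sumP A (fun z => A (z * d^-1))), (capP B (fun z => B (d * z))), p1, q2.
do 6 (split; first done); left.
apply: (arith e1 e2 Hs') => h; [move: h1 | move: h2]; by rewrite h.
Qed.
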